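(* Consider noiseless non-adaptive sensing $\bm{y} = \bm{A}\bm{x}$, where $\bm{x} \in \mathbb{R}^N$ is an arbitrary one-sparse signal whose single nonzero entry equals $\mu \neq 0$, and $\bm{A}$ is a binary ($\{0,1\}$-valued) $M \times N$ sensing matrix with $M = T\log_2(N)$ measurements, where $T \geq 1$ is a constant. Then any such binary sensing matrix $\bm{A}$ from which every such one-sparse $\bm{x}$ can be reconstructed from $\bm{y} = \bm{A}\bm{x}$ has $l_0$ cost $\|\bm{A}\|_{0,0} = \Theta(N\log_2(N))$ as $N \to \infty$.
   Context: For an $M\times N$ matrix $\bm{A} = [A_1 \cdots A_N]$ with columns $A_i$, the $l_0$ cost is $\|\bm{A}\|_{0,0} = \sum_{i=1}^N \|A_i\|_0 = \sum_{i=1}^N\sum_{j=1}^M \mathbb{I}(A(j,i)\neq 0)$, the number of nonzero entries. A signal is one-sparse if it has at most one nonzero entry. A non-adaptive strategy acquires all $M$ measurements at once with a fixed matrix $\bm{A}$ not chosen based on previous observations. $F(N) = \Theta(g(N))$ means there are positive constants $C_1, C_2$ with $C_1 g(N) \leq F(N) \leq C_2 g(N)$ for all sufficiently large $N$. *)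

(* Defs.v *)
From HB Require Import structures.
From mathcomp Require Import all_boot all_order all_algebra.
From mathcomp Require Import all_classical all_reals all_analysis.
Set Implicit Arguments. Unset Strict Implicit. Unset Printing Implicit Defensive.
Import Order.TTheory GRing.Theory Num.Theory.
Local Open Scope ring_scope.

Definition log2 (R : realType) (x : R) : R := ln x / ln 2.

Definition l0_cost (R : realType) (m n : nat) (A : 'M[R]_(m, n)) : nat :=
  (\sum_(i < n) \sum_(j < m) nat_of_bool (A j i != 0%R))%N.

Definition binary_mx (R : realType) (m n : nat) (A : 'M[R]_(m, n)) : Prop :=
  forall j i, A j i = 0 \/ A j i = 1.

Definition one_sparse_with (R : realType) (n : nat) (mu : R) (x : 'cV[R]_n) : Prop :=
  exists i : 'I_n, x i 0 = mu /\ forall k : 'I_n, k != i -> x k 0 = 0.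

Definition recovers_one_sparse (R : realType) (m n : nat) (mu : R)
    (A : 'M[R]_(m, n)) : Prop :=
  forall x x' : 'cV[R]_n, one_sparse_with mu x -> one_sparse_with mu x' ->
    A *m x = A *m x' -> x = x'.

(* Main.v *)
Require Import Defs.
From mathcomp Require Import all_boot all_order all_algebra.
From mathcomp Require Import all_classical all_reals all_analysis.
From mathcomp Require Import ring lra.
Import Order.TTheory GRing.Theory Num.Theory.
Local Open Scope ring_scope.

Definition wt {M : nat} (v : {ffun 'I_M -> bool}) : nat := (\sum_j nat_of_bool (v j))%N.

Lemma count_bound (R : realType) (q : R) (M N : nat) (f : 'I_N -> {ffun 'I_M -> bool}) :
  0 <= q -> injective f -> \sum_i q ^+ (wt (f i)) <= (1 + q) ^+ M.
Proof.
move=> q0 finj.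
have -> : (1 + q) ^+ M = \sum_(v : {ffun 'I_M -> bool}) q ^+ wt v.
  rewrite -[M in LHS]card_ord -prodr_const.
  rewrite (eq_bigr (fun j : 'I_M => \sum_(b : bool) q ^+ b)); last first.
    by move=> j _; rewrite big_bool /= expr1 expr0 addrC.
  rewrite bigA_distr_bigA /=; apply: eq_bigr => v _.
  by rewrite /wt expr_sum.
have -> : \sum_i q ^+ wt (f i) = \sum_(v in [set f x | x in [set: 'I_N]]) q ^+ wt v.
  rewrite big_imset /=; last by move=> x y _ _; apply: finj.
  by apply: eq_bigl => i; rewrite inE.
rewrite [X in _ <= X](bigID (fun v => v \in [set f x | x in [set: 'I_N]])) /=.
rewrite lerDl; apply: sumr_ge0 => v _; exact: exprn_ge0.
Qed.

Lemma tangent (R : realType) (s w a : R) :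
  expR (- s * a) * (1 - s * (w - a)) <= expR (- s * w).
Proof.
have -> : - s * w = - s * a + (- s * (w - a)) by ring.
rewrite expRD ler_wpM2l ?expR_ge0 //.
have := expR_ge1Dx (- s * (w - a)).
by rewrite mulNr.
Qed.

Lemma jensen (R : realType) (s : R) (N : nat) (w : 'I_N -> nat) :
  (0 < N)%N ->
  N%:R * expR (- s * ((\sum_i w i)%N%:R / N%:R)) <= \sum_i expR (- s) ^+ w i.
Proof.
move=> N0; set a := (_ / _).
have Nne : (N%:R : R) != 0 by rewrite pnatr_eq0 -lt0n.
have : \sum_i expR (- s * a) * (1 - s * ((w i)%:R - a)) <= \sum_i expR (- s) ^+ w i.
  by apply: ler_sum => i _; rewrite -expRM_natl [_ * - s]mulrC; exact: tangent.
suff -> : \sum_i expR (- s * a) * (1 - s * ((w i)%:R - a)) = N%:R * expR (- s * a) by [].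
rewrite -mulr_sumr mulrC; congr (_ * _).
rewrite sumrB sumr_const card_ord -mulr_sumr sumrB sumr_const card_ord -natr_sum.
by rewrite /a -[(_ / _) *+ N]mulr_natr divfK // subrr mulr0 subr0.
Qed.

Lemma col_inj (R : realType) (M N : nat) (mu : R) (A : 'M[R]_(M, N)) :
  mu != 0 -> binary_mx A -> recovers_one_sparse mu A ->
  injective (fun i => [ffun j => A j i != 0] : {ffun 'I_M -> bool}).
Proof.
move=> hmu hb hr i k /= /ffunP E.
have Ec : col i A = col k A.
  apply/matrixP => j l; rewrite !mxE; have := E j; rewrite !ffunE.
  by case: (hb j i) => ->; case: (hb j k) => ->; rewrite ?eqxx ?oner_eq0.
have os : forall l : 'I_N, one_sparse_with mu (mu *: delta_mx l (0:'I_1)).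
  move=> l; exists l; split; first by rewrite !mxE !eqxx mulr1.
  by move=> k' hk; rewrite !mxE (negbTE hk) mulr0.
have := hr _ _ (os i) (os k).
rewrite -!scalemxAr -!colE Ec => /(_ erefl) /matrixP /(_ i 0).
rewrite !mxE !eqxx /=; case: eqVneq => // ne; rewrite mulr1 mulr0 => mu0.
by move: hmu; rewrite mu0 eqxx.
Qed.

Theorem theorem1 (R : realType) (T : R) (hT : 1 <= T) (mu : R) (hmu : mu != 0) :
  exists C1 C2 : R, 0 < C1 /\ 0 < C2 /\
  exists N0 : nat, forall (N M : nat) (A : 'M[R]_(M, N)),
    (N0 <= N)%N ->
    (M : int) = Num.ceil (T * log2 (N%:R : R)) ->
    binary_mx A ->
    recovers_one_sparse mu A ->
    C1 * (N%:R * log2 (N%:R : R)) <= (l0_cost A)%:R /\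
    (l0_cost A)%:R <= C2 * (N%:R * log2 (N%:R : R)).
Proof.
set l2 := ln (2 : R).
have l2pos : 0 < l2 by apply: ln_gt0; rewrite ltr1n.
have l2le1 : l2 <= 1.
  have h : ln (1 + 1 : R) <= 1 by apply: le_ln1Dx; lra.
  by move: h; rewrite (_ : 1 + 1 = 2 :> R) //; lra.
set q := l2 / (2 * T).
have qpos : 0 < q by apply: divr_gt0 => //; lra.
have Tq : 2 * T * q = l2 by rewrite /q mulrC divfK //; lra.
have qlt1 : q < 1 by nra.
set s := - ln q.
have spos : 0 < s by rewrite /s oppr_gt0; apply: ln_lt0; rewrite qpos qlt1.
have eq_s : expR (- s) = q by rewrite /s opprK lnK // posrE.
exists (l2 / (4 * s)), (T + 1); split; first by apply: divr_gt0 => //; lra.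
split; first lra.
exists 4%N => N M A hN hM hb hr.
set lN := ln (N%:R : R).
have Npos : (0 < N)%N by apply: leq_trans hN.
have NR : (4 : R) <= N%:R by rewrite (ler_nat R 4 N).
have lN2 : 2 * l2 <= lN.
  have -> : 2 * l2 = ln (2 * 2 : R).
    rewrite lnM ?posrE //.
    by rewrite /l2; lra.
  rewrite /lN ler_ln ?posrE //; lra.
have LE : log2 (N%:R : R) * l2 = lN by rewrite /log2 -/lN -/l2 divfK // gt_eqF.
set L := log2 (N%:R : R).
have Lge2 : 2 <= L.
  have -> : L = lN / l2 by rewrite -LE mulfK // gt_eqF.
  by rewrite ler_pdivlMr.
have Mb : M%:R <= T * L + 1.
  have := ceilB1_lt (T * L); rewrite -hM.
  rewrite rmorphB /= !pmulrn; lra.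
have Npos' : (0 : R) < N%:R by lra.
split; last first.
  have h : forall i : 'I_N, (\sum_(j < M) nat_of_bool (A j i != 0%R) <= M)%N.
    move=> i; rewrite -[M in (_ <= M)%N]card_ord -sum1_card.
    by apply: leq_sum => j _; exact: leq_b1.
  have l0le : (l0_cost A <= M * N)%N.
    rewrite /l0_cost; apply: (@leq_trans (\sum_(i < N) M)%N).
      by apply: leq_sum => i _; exact: h.
    by rewrite sum_nat_const card_ord mulnC.
  have : (l0_cost A)%:R <= (M * N)%:R :> R by rewrite ler_nat.
  rewrite natrM => h1.
  have h2 : M%:R * N%:R <= (T * L + 1) * N%:R :> R by apply: ler_wpM2r; lra.
  nra.
set col := fun i : 'I_N => [ffun j => A j i != 0] : {ffun 'I_M -> bool}.
have cinj : injective col := @col_inj R M N mu A hmu hb hr.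
have l0E : l0_cost A = (\sum_i wt (col i))%N.
  by rewrite /l0_cost; apply: eq_bigr => i _; apply: eq_bigr => j _; rewrite /col ffunE.
set W := (\sum_i wt (col i))%N.
have J := @jensen R s N (fun i => wt (col i)) Npos.
have CB := @count_bound R q M N col (ltW qpos) cinj.
rewrite -/W eq_s in J.
set a := W%:R / N%:R in J.
have hexp : (1 + q) ^+ M <= expR (M%:R * q).
  rewrite expRM_natl; apply: lerXn2r; rewrite ?nnegrE ?expR_ge0 //; try lra.
  exact: expR_ge1Dx.
have key : expR (lN + - s * a) <= expR (M%:R * q).
  rewrite expRD /lN lnK ?posrE //; apply: le_trans hexp; apply: le_trans CB.
  exact: J.
rewrite ler_expR in key.
have aW : W%:R = a * N%:R by rewrite /a divfK // gt_eqF.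
rewrite l0E aW.
have hMq : M%:R * q <= (T * L + 1) * q by apply: ler_wpM2r; lra.
have hTLq : T * L * q = L * l2 / 2 by rewrite -Tq; field.
have hq4 : q <= lN / 4.
  rewrite /q ler_pdivrMr; last lra.
  have -> : lN / 4 * (2 * T) = lN * T / 2 by field.
  have h0 : 0 <= lN * (T - 1) by apply: mulr_ge0; lra.
  have : l2 * 2 <= lN * T by rewrite mulrBr mulr1 in h0; lra.
  lra.
have e1 : (T * L + 1) * q = lN / 2 + q by rewrite mulrDl mul1r hTLq -LE.

have hsa : lN <= 4 * (s * a).
  rewrite e1 in hMq; move: key; rewrite mulNr; lra.
have -> : l2 / (4 * s) * (N%:R * L) = (N%:R / (4 * s)) * lN.
  rewrite -LE -/L; field; lra.
apply: le_trans (ler_wpM2l _ hsa) _.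
  apply: divr_ge0; lra.
rewrite le_eqVlt; apply/orP; left; apply/eqP; rewrite /a; field; lra.
Qed.
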